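(* Let $\mathcal G$ be a second-countable ample groupoid such that (1) $\mathcal G$ is minimal and effective, and (2) every compact open subset of $\mathcal G$ is regular open. Then $A_{\mathbb B}(\mathcal G)$ is congruence-simple.
   Context: $\mathbb B=(\{0,1\},\text{or},\text{and})$. An ample groupoid is a topological groupoid whose unit space $\mathcal G^{(0)}$ is locally compact Hausdorff and totally disconnected and whose source and range maps $s,r$ are local homeomorphisms ($\mathcal G$ need not be Hausdorff). $\mathcal G$ is minimal if $\mathcal G^{(0)}$ has no open invariant subsets other than $\varnothing$ and $\mathcal G^{(0)}$ (invariant: $s(\gamma)\in D\Rightarrow r(\gamma)\in D$); effective if the interior of $\{\gamma:s(\gamma)=r(\gamma)\}$ equals $\mathcal G^{(0)}$. A subset is regular open if it equals the interior of its closure. The Steinberg algebra $A_{\mathbb B}(\mathcal G)$ is the set of $\mathbb B$-valued functions on $\mathcal G$ that are finite sums of characteristic functions of compact open bisections, with pointwise addition and convolution $(f*g)(\gamma)=\sum_{\alpha\beta=\gamma}f(\alpha)g(\beta)$. A hemiring is congruence-simple if its only congruences are the full relation and the diagonal. *)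

(* Defs.v *)
From HB Require Import structures.
From mathcomp Require Import all_boot all_order.
From mathcomp Require Import boolp classical_sets functions topology.

Set Implicit Arguments. Unset Strict Implicit. Unset Printing Implicit Defensive.
Local Open Scope classical_set_scope.

Section Groupoid.
Context {G : topologicalType}.

(* A groupoid is encoded on its set of arrows G; the units are identified
   with their identity arrows.  s, r : source/range, mul x y is the product
   x y, meaningful (and only used) when s x = r y; inv is the inverse. *)
Definition is_groupoid (s r : G -> G) (mul : G -> G -> G) (inv : G -> G) :=
  [/\ (forall x, s (s x) = s x /\ r (s x) = s x /\ s (r x) = r x /\ r (r x) = r x),
      (forall x y, s x = r y -> s (mul x y) = s y /\ r (mul x y) = r x),
      (forall x y z, s x = r y -> s y = r z -> mul (mul x y) z = mul x (mul y z)),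
      (forall x, mul (r x) x = x /\ mul x (s x) = x) &
      (forall x, [/\ s (inv x) = r x, r (inv x) = s x,
                    mul x (inv x) = r x & mul (inv x) x = s x])].

Definition unit_space (s : G -> G) : set G := range s.

Definition rel_open (X U : set G) := exists2 O, open O & U = X `&` O.

Definition local_homeo_onto (f : G -> G) (X : set G) :=
  (forall x, X (f x)) /\
  forall x, exists U : set G,
    [/\ open U, U x, {within U, continuous f},
        (forall y z, U y -> U z -> f y = f z -> y = z) &
        (forall W, open W -> W `<=` U -> rel_open X (f @` W))].

Definition rel_hausdorff (X : set G) :=
  forall x y, X x -> X y -> x <> y ->
  exists U V, [/\ open U, open V, U x, V y & X `&` U `&` V = set0].

Definition rel_locally_compact (X : set G) :=
  forall x, X x -> exists K O,
    [/\ compact K, K `<=` X, open O, O x & X `&` O `<=` K].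

Definition ample_groupoid (s r : G -> G) (mul : G -> G -> G) (inv : G -> G) :=
  [/\ is_groupoid s r mul inv,
      {within [set p : G * G | s p.1 = r p.2], continuous (fun p => mul p.1 p.2)},
      continuous inv,
      [/\ rel_locally_compact (unit_space s), rel_hausdorff (unit_space s)
        & totally_disconnected (unit_space s)] &
      local_homeo_onto s (unit_space s) /\ local_homeo_onto r (unit_space s)].

Definition invariant (s r : G -> G) (D : set G) :=
  forall g, D (s g) -> D (r g).

Definition minimal (s r : G -> G) :=
  forall D, D `<=` unit_space s -> rel_open (unit_space s) D -> invariant s r D ->
  D = set0 \/ D = unit_space s.

Definition effective (s r : G -> G) :=
  [set g | s g = r g]° = unit_space s.

Definition bisection (s r : G -> G) (B : set G) :=
  (forall x y, B x -> B y -> s x = s y -> x = y) /\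
  (forall x y, B x -> B y -> r x = r y -> x = y).

Definition compact_open_bisection (s r : G -> G) (B : set G) :=
  [/\ compact B, open B & bisection s r B].

(* Steinberg algebra over the Boolean semifield B = ({0,1}, or, and):
   finite sums (= pointwise or) of characteristic functions of
   compact open bisections *)
Definition steinberg (s r : G -> G) (f : G -> bool) :=
  exists n (Bs : nat -> set G),
    (forall i, (i < n)%N -> compact_open_bisection s r (Bs i)) /\
    (forall g, f g = true <-> exists2 i, (i < n)%N & Bs i g).

Definition badd (f g : G -> bool) : G -> bool := fun x => f x || g x.

(* convolution: (f*g)(c) = sum_{ab = c} f(a) g(b), the sum in B *)
Definition bconv (s r : G -> G) (mul : G -> G -> G) (f g : G -> bool) : G -> bool :=
  fun c => `[< exists a b, [/\ s a = r b, mul a b = c, f a & g b] >].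

Definition congruence (s r : G -> G) (mul : G -> G -> G)
    (R : (G -> bool) -> (G -> bool) -> Prop) :=
  let A := steinberg s r in
  [/\ (forall f, A f -> R f f),
      (forall f g, A f -> A g -> R f g -> R g f),
      (forall f g h, A f -> A g -> A h -> R f g -> R g h -> R f h) &
      (forall f f' g g', A f -> A f' -> A g -> A g' -> R f f' -> R g g' ->
         R (badd f g) (badd f' g') /\ R (bconv s r mul f g) (bconv s r mul f' g'))].

Definition congruence_simple (s r : G -> G) (mul : G -> G -> G) :=
  forall R, congruence s r mul R ->
    (forall f g, steinberg s r f -> steinberg s r g -> R f g) \/
    (forall f g, steinberg s r f -> steinberg s r g -> R f g -> f = g).

End Groupoid.

(* Main.v *)
Require Import Defs.
From HB Require Import structures.
From mathcomp Require Import all_boot all_order.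
From mathcomp Require Import boolp classical_sets functions topology.
From mathcomp Require Import zify.
Set Implicit Arguments. Unset Strict Implicit. Unset Printing Implicit Defensive.
Local Open Scope classical_set_scope.

Fixpoint lin {I : Type} (i : I) (l : seq I) : Prop :=
  if l is j :: l' then j = i \/ lin i l' else False.

Lemma lin_cat {I : Type} (i : I) l1 l2 : lin i (l1 ++ l2) <-> lin i l1 \/ lin i l2.
Proof.
elim: l1 => [|j l1 IH] /=; first by split; [right|case].
rewrite IH; tauto.
Qed.

Section Main.
Variables (G : topologicalType) (s r : G -> G) (mul : G -> G -> G) (inv : G -> G).
Hypothesis HA : ample_groupoid s r mul inv.

Lemma HG : is_groupoid s r mul inv. Proof. by case: HA. Qed.

Lemma ss x : s (s x) = s x. Proof. by case: HG => H _ _ _ _; case: (H x). Qed.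
Lemma rs x : r (s x) = s x. Proof. by case: HG => H _ _ _ _; case: (H x) => _ []. Qed.
Lemma sr x : s (r x) = r x. Proof. by case: HG => H _ _ _ _; case: (H x) => _ [_ []]. Qed.
Lemma rr x : r (r x) = r x. Proof. by case: HG => H _ _ _ _; case: (H x) => _ [_ []]. Qed.
Lemma smul x y : s x = r y -> s (mul x y) = s y.
Proof. by case: HG => _ H _ _ _ /H []. Qed.
Lemma rmul x y : s x = r y -> r (mul x y) = r x.
Proof. by case: HG => _ H _ _ _ /H []. Qed.
Lemma mulA x y z : s x = r y -> s y = r z -> mul (mul x y) z = mul x (mul y z).
Proof. by case: HG => _ _ H _ _; apply: H. Qed.
Lemma mulr x : mul (r x) x = x. Proof. by case: HG => _ _ _ H _; case: (H x). Qed.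
Lemma muls x : mul x (s x) = x. Proof. by case: HG => _ _ _ H _; case: (H x). Qed.
Lemma sinv x : s (inv x) = r x. Proof. by case: HG => _ _ _ _ H; case: (H x). Qed.
Lemma rinv x : r (inv x) = s x. Proof. by case: HG => _ _ _ _ H; case: (H x). Qed.
Lemma mulV x : mul x (inv x) = r x. Proof. by case: HG => _ _ _ _ H; case: (H x). Qed.
Lemma mulVx x : mul (inv x) x = s x. Proof. by case: HG => _ _ _ _ H; case: (H x). Qed.

Lemma invK x : inv (inv x) = x.
Proof.
have e1 : s (inv (inv x)) = s x by rewrite sinv rinv.
rewrite -[inv (inv x)]muls e1 -(mulVx x) -mulA ?sinv //.
by rewrite mulVx sinv mulr.
Qed.

Local Notation X := (unit_space s).

Lemma XP u : X u <-> s u = u.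
Proof. by split=> [[x _ <-]|<-]; [rewrite ss|exists u]. Qed.
Lemma Xs u : X u -> s u = u. Proof. by move/XP. Qed.
Lemma Xr u : X u -> r u = u. Proof. by move=> /XP <-; rewrite rs. Qed.
Lemma X_s x : X (s x). Proof. by exists x. Qed.
Lemma X_r x : X (r x). Proof. by apply/XP; rewrite sr. Qed.


Lemma Hmulc : {within [set p : G * G | s p.1 = r p.2], continuous (fun p => mul p.1 p.2)}.
Proof. by case: HA. Qed.
Lemma Hinvc : continuous inv. Proof. by case: HA. Qed.
Lemma Htop : [/\ rel_locally_compact X, rel_hausdorff X & totally_disconnected X].
Proof. by case: HA. Qed.
Lemma Ls : local_homeo_onto s X. Proof. by case: HA => _ _ _ _ []. Qed.
Lemma Lr : local_homeo_onto r X. Proof. by case: HA => _ _ _ _ []. Qed.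

Lemma lh_cont f : local_homeo_onto f X -> continuous f.
Proof.
move=> [_ H] x; have [U [oU Ux cU _ _]] := H x.
move: cU; rewrite continuous_open_subspace // => cU.
by apply: cU; rewrite inE.
Qed.

Lemma s_cont : continuous s. Proof. exact: lh_cont Ls. Qed.
Lemma r_cont : continuous r. Proof. exact: lh_cont Lr. Qed.

Lemma open_pre (f : G -> G) (O : set G) : continuous f -> open O -> open (f @^-1` O).
Proof. by move=> cf; have /continuousP := cf; apply. Qed.

Lemma X_open : open X.
Proof.
rewrite openE => x Xx; have [_ H] := Ls; have [U [oU Ux _ iU _]] := H x.
have nU : nbhs x U by apply: open_nbhs_nbhs.
have nsU : nbhs x (s @^-1` U).
  by apply: (@s_cont x U); rewrite (Xs Xx).
apply: filterS (filterI nU nsU) => y [Uy sUy].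
by apply/XP; apply: iU => //; rewrite ss.
Qed.

Lemma lh_open f (W : set G) : local_homeo_onto f X -> open W -> open (f @` W).
Proof.
move=> [fX H] oW; rewrite openE => _ [w Ww <-].
have [U [oU Uw _ _ oimg]] := H w.
have [O oO e] := oimg (W `&` U) (openI oW oU) (@subIsetr _ _ _).
have nO : nbhs (f w) (X `&` O).
  apply: open_nbhs_nbhs; split; first exact: openI X_open oO.
  by rewrite -e; exists w.
by apply: filterS nO; rewrite -e => y [z [Wz _] <-]; exists z.
Qed.

Lemma s_open (W : set G) : open W -> open (s @` W). Proof. exact: lh_open Ls. Qed.
Lemma r_open (W : set G) : open W -> open (r @` W). Proof. exact: lh_open Lr. Qed.

Lemma open_bis x : exists U, [/\ open U, U x & bisection s r U].
Proof.
have [_ Hs] := Ls; have [_ Hr] := Lr.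
have [U [oU Ux _ iU _]] := Hs x; have [V [oV Vx _ iV _]] := Hr x.
exists (U `&` V); split => //; first exact: openI.
by split => y z [Uy Vy] [Uz Vz]; [apply: iU|apply: iV].
Qed.

Lemma sect_nbhs f (D N : set G) d0 : local_homeo_onto f X ->
  open D -> (forall x y, D x -> D y -> f x = f y -> x = y) -> D d0 -> nbhs d0 N ->
  exists O, [/\ open O, O (f d0) & forall d, D d -> O (f d) -> N d].
Proof.
move=> Lf oD iD Dd0 Nd0; exists (f @` (N° `&` D)); split.
- by apply: lh_open => //; apply: openI => //; exact: open_interior.
- by exists d0.
- move=> d Dd [d' [Nd' Dd'] e]; rewrite -(iD _ _ Dd' Dd e).
  exact: interior_subset.
Qed.


Definition prodset (C D : set G) :=
  [set g | exists c d, [/\ C c, D d, s c = r d & g = mul c d]].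

Lemma mul_cont_at a b (N : set G) : s a = r b -> nbhs (mul a b) N ->
  exists N1 N2, [/\ nbhs a N1, nbhs b N2 &
    forall a' b', N1 a' -> N2 b' -> s a' = r b' -> N (mul a' b')].
Proof.
move=> e nN.
have := (subspace_continuousP _ _).1 Hmulc (a, b) e N nN.
case=> [[N1 N2]] /= [n1 n2] sub.
exists N1, N2; split => // a' b' Na Nb e'.
exact: (sub (a', b')).
Qed.

Lemma inv_cont_at d (N : set G) : nbhs (inv d) N -> nbhs d (inv @^-1` N).
Proof. exact: (@Hinvc d N). Qed.

Lemma s_cont_at d (N : set G) : nbhs (s d) N -> nbhs d (s @^-1` N).
Proof. exact: (@s_cont d N). Qed.

Lemma r_cont_at d (N : set G) : nbhs (r d) N -> nbhs d (r @^-1` N).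
Proof. exact: (@r_cont d N). Qed.

Lemma prod_open C D : open C -> open D ->
  (forall x y, D x -> D y -> s x = s y -> x = y) -> open (prodset C D).
Proof.
move=> oC oD iD; rewrite openE => _ [c0 [d0 [Cc0 Dd0 e0 ->]]].
set g0 := mul c0 d0.
have sg0 : s g0 = s d0 by rewrite /g0 smul.
have key : mul g0 (inv d0) = c0.
  by rewrite /g0 mulA ?rinv // mulV -e0 muls.
have [N1 [N2 [n1 n2 sub]]] : exists N1 N2, [/\ nbhs g0 N1, nbhs (inv d0) N2 &
    forall a' b', N1 a' -> N2 b' -> s a' = r b' -> C (mul a' b')].
  by apply: mul_cont_at; [rewrite sg0 rinv|rewrite key; exact: open_nbhs_nbhs].
have n2' := inv_cont_at n2.
have [O [oO Od0 hO]] := sect_nbhs Ls oD iD Dd0 n2'.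
have nO : nbhs g0 (s @^-1` (O `&` s @` D)).
  apply: s_cont_at; apply: open_nbhs_nbhs; split.
    by apply: openI => //; exact: s_open.
  by rewrite sg0; split => //; exists d0.
apply: filterS (filterI n1 nO) => g [N1g [Og [d Dd sd]]].
have e1 : s g = r (inv d) by rewrite rinv.
exists (mul g (inv d)), d; split => //.
- by apply: sub => //; apply: hO => //; rewrite sd.
- by rewrite smul // sinv.
- by rewrite mulA ?sinv // mulVx sd muls.
Qed.

Lemma closed_fib : closed [set p : G * G | s p.1 = r p.2].
Proof.
rewrite -openC openE => -[a b] /= neq.
have [_ HH _] := Htop.
have [U [V [oU oV Ua Vb e]]] := HH _ _ (X_s a) (X_r b) neq.
exists (s @^-1` U, r @^-1` V) => /=.
  split; [apply: s_cont_at|apply: r_cont_at]; exact: open_nbhs_nbhs.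
move=> [a' b'] [/= Ua' Vb'] /= e'.
have : (X `&` U `&` V) (s a') by split; [split; [exact: X_s|]|rewrite e'].
by rewrite e.
Qed.

Lemma prod_compact C D : compact C -> compact D -> compact (prodset C D).
Proof.
move=> cC cD.
have -> : prodset C D = (fun p : G * G => mul p.1 p.2) @`
    ((C `*` D) `&` [set p : G * G | s p.1 = r p.2]).
  apply/seteqP; split => g.
    by move=> [c [d [Cc Dd e ->]]]; exists (c, d).
  by move=> [[c d] [[/= Cc Dd] /= e] <-]; exists c, d.
apply: continuous_compact.
  by apply: continuous_subspaceW Hmulc; exact: subIsetr.
by apply: compact_closedI; [exact: compact_setX|exact: closed_fib].
Qed.

Lemma prod_bis C D : bisection s r C -> bisection s r D ->
  bisection s r (prodset C D).
Proof.
move=> [sC rC] [sD rD]; split.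
- move=> _ _ [c [d [Cc Dd e ->]]] [c' [d' [Cc' Dd' e' ->]]].
  rewrite !smul // => dd; have edd := sD _ _ Dd Dd' dd.
  subst d'; have := sC _ _ Cc Cc'; rewrite e e' => /(_ erefl) ->; done.
- move=> _ _ [c [d [Cc Dd e ->]]] [c' [d' [Cc' Dd' e' ->]]].
  rewrite !rmul // => cc; have ecc := rC _ _ Cc Cc' cc.
  subst c'; have := rD _ _ Dd Dd'; rewrite -e -e' => /(_ erefl) ->; done.
Qed.

Lemma cob_prod C D : compact_open_bisection s r C ->
  compact_open_bisection s r D -> compact_open_bisection s r (prodset C D).
Proof.
move=> [cC oC bC] [cD oD bD]; split.
- exact: prod_compact.
- by apply: prod_open => //; case: bD.
- exact: prod_bis.
Qed.

Lemma inv_img (C : set G) : inv @` C = inv @^-1` C.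
Proof.
apply/seteqP; split => g; first by move=> [c Cc <-]; rewrite /= invK.
by move=> Cg; exists (inv g) => //; rewrite invK.
Qed.

Lemma cob_inv C : compact_open_bisection s r C ->
  compact_open_bisection s r (inv @` C).
Proof.
move=> [cC oC [sC rC]]; split.
- apply: (@continuous_compact G G inv C) => //.
  by apply: continuous_subspaceT; exact: Hinvc.
- by rewrite inv_img; apply: open_pre oC; exact: Hinvc.
- rewrite inv_img; split => x y /= Cx Cy.
  + move=> e; rewrite -[x]invK -[y]invK (rC _ _ Cx Cy) //.
    by rewrite !rinv.
  + move=> e; rewrite -[x]invK -[y]invK (sC _ _ Cx Cy) //.
    by rewrite !sinv.
Qed.


Lemma compact_fin (K : set G) (I : Type) (P : I -> set G) :
  compact K -> (forall i, closed (P i)) ->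
  (forall y, K y -> exists i, ~ P i y) ->
  exists l : seq I, forall y, K y -> exists i, lin i l /\ ~ P i y.
Proof.
move=> cK cP cov; apply: contrapT => nofin.
pose Bs (l : seq I) := [set y | K y /\ forall i, lin i l -> P i y].
pose F := filter_from [set: seq I] Bs.
have FF : Filter F.
  apply: filter_from_filter; first by exists [::].
  move=> l1 l2 _ _; exists (l1 ++ l2) => // y [Ky Hy]; split; split => // i Hi;
    apply: Hy; apply/lin_cat; by [left|right].
have PF : ProperFilter F.
  apply: filter_from_proper => l _.
  apply: contrapT => /set0P/negP; rewrite negbK => /eqP B0.
  apply: nofin; exists l => y Ky; apply: contrapT => ne.
  have : Bs l y.
    split => // i Hi; apply: contrapT => nPi; apply: ne; exists i; split => //.
  by rewrite B0.
have FK : F K by exists [::] => // y [].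
have [y [Ky cly]] := cK F PF FK.
have [i nPi] := cov y Ky.
have nb : nbhs y (~` P i).
  by apply: open_nbhs_nbhs; split => //; exact: closed_openC.
have F1 : F (Bs [:: i]) by exists [:: i].
have [z [[_ Pz] nPz]] := cly _ _ F1 nb.
by apply: nPz; apply: Pz; left.
Qed.

Lemma open_fin (I : Type) (f : I -> set G) (l : seq I) :
  (forall i, open (f i)) -> open [set y | forall i, lin i l -> f i y].
Proof.
move=> oF; elim: l => [|i l IH].
  have -> : [set y | forall i, lin i [::] -> f i y] = setT
    by apply/seteqP; split => // y _ i [].
  exact: openT.
have -> : [set y | forall j, lin j (i :: l) -> f j y] =
    f i `&` [set y | forall j, lin j l -> f j y].
  apply/seteqP; split => y.
    by move=> H; split; [apply: H; left|move=> j Hj; apply: H; right].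
  by move=> [fi H] j [<-|Hj] //; apply: H.
exact: openI.
Qed.

Lemma open_cup (I : Type) (f : I -> set G) (D : I -> Prop) :
  (forall i, D i -> open (f i)) -> open [set y | exists i, D i /\ f i y].
Proof.
move=> oF.
have -> : [set y | exists i, D i /\ f i y] = \bigcup_(i in D) f i.
  by apply/seteqP; split => y; [move=> [i [Di fi]]; exists i|move=> [i Di fi]; exists i].
exact: bigcup_open.
Qed.

Lemma hd : rel_hausdorff X. Proof. by case: Htop. Qed.

Lemma sep_point_compact x (B : set G) : X x -> B `<=` X -> compact B -> ~ B x ->
  exists U V, [/\ open U, open V, U x, B `<=` V & X `&` U `&` V = set0].
Proof.
move=> Xx BX cB nBx.
pose I := {p : set G * set G | [/\ open p.1, open p.2, p.1 x &
  X `&` p.1 `&` p.2 = set0]}.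
have cov : forall y, B y -> exists i : I, ~ (~` (sval i).2) y.
  move=> y By.
  have nxy : x <> y by move=> h; apply: nBx; rewrite h.
  have [U [V [oU oV Ux Vy e]]] := hd Xx (BX _ By) nxy.
  by exists (exist _ (U, V) (And4 oU oV Ux e)) => /=.
have [l Hl] := @compact_fin B I (fun i => ~` (sval i).2) cB
  (fun i => open_closedC (let: exist _ (And4 _ o _ _) := i in o)) cov.
exists [set y | forall i, lin i l -> (sval i).1 y].
exists [set y | exists i, lin i l /\ (sval i).2 y]; split.
- apply: open_fin => -[[U V] [oU oV Ux e]] //.
- by apply: open_cup => -[[U V] [oU oV Ux e]].
- by move=> -[[U V] [oU oV Ux e]].
- move=> y By; have [i [Hi nV]] := Hl y By; exists i; split => //.
  exact: contrapT.
- apply/seteqP; split => // z [[Xz Uz] [[[U V] [oU oV Ux e]] [Hi /= Vz]]].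
  have : (X `&` U `&` V) z by split; [split => //; exact: (Uz _ Hi)|].
  by rewrite e.
Qed.

Lemma sep_compact2 (A B : set G) : A `<=` X -> B `<=` X -> compact A ->
  compact B -> A `&` B = set0 ->
  exists U V, [/\ open U, open V, A `<=` U, B `<=` V & X `&` U `&` V = set0].
Proof.
move=> AX BX cA cB eAB.
pose I := {p : set G * set G | [/\ open p.1, open p.2, B `<=` p.2 &
  X `&` p.1 `&` p.2 = set0]}.
have cov : forall y, A y -> exists i : I, ~ (~` (sval i).1) y.
  move=> y Ay.
  have nBy : ~ B y by move=> By; have : (A `&` B) y by []; rewrite eAB.
  have [U [V [oU oV Uy BV e]]] := sep_point_compact (AX _ Ay) BX cB nBy.
  by exists (exist _ (U, V) (And4 oU oV BV e)) => /=.
have [l Hl] := @compact_fin A I (fun i => ~` (sval i).1) cA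
  (fun i => open_closedC (let: exist _ (And4 o _ _ _) := i in o)) cov.
exists [set y | exists i, lin i l /\ (sval i).1 y].
exists [set y | forall i, lin i l -> (sval i).2 y]; split.
- by apply: open_cup => -[[U V] [oU oV Ux e]].
- apply: open_fin => -[[U V] [oU oV Ux e]] //.
- move=> y Ay; have [i [Hi nU]] := Hl y Ay; exists i; split => //.
  exact: contrapT.
- by move=> y By -[[U V] [oU oV BV e]] /= _; apply: BV.
- apply/seteqP; split => // z [[Xz [[[U V] [oU oV Ux e]] [Hi /= Uz]]] Vz].
  have : (X `&` U `&` V) z by split; [split => //|exact: (Vz _ Hi)].
  by rewrite e.
Qed.


Section Zero.
Variables (x : G) (K : set G).
Hypotheses (cK : compact K) (KX : K `<=` X) (Kx : K x).

Definition good C := (exists2 V, open V & C = K `&` V) /\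
  (exists2 F, closed F & C = K `&` F).

Definition Qc := [set y | K y /\ forall C, good C -> C x -> C y].

Lemma good_sub C : good C -> C `<=` K.
Proof. by move=> [[V _ ->] _] y []. Qed.

Lemma good_I C1 C2 : good C1 -> good C2 -> good (C1 `&` C2).
Proof.
move=> [[V1 oV1 e1] [F1 cF1 f1]] [[V2 oV2 e2] [F2 cF2 f2]]; split.
- exists (V1 `&` V2); first exact: openI.
  by rewrite e1 e2; apply/seteqP; split => y; [move=> [[? ?] [? ?]]|move=> [? [? ?]]].
- exists (F1 `&` F2); first exact: closedI.
  by rewrite f1 f2; apply/seteqP; split => y; [move=> [[? ?] [? ?]]|move=> [? [? ?]]].
Qed.

Lemma good_fin (I : Type) (f : I -> set G) l : (forall i, good (f i)) ->
  good (K `&` [set y | forall i, lin i l -> f i y]).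
Proof.
move=> gf; elim: l => [|i l IH].
  have -> : K `&` [set y | forall i, lin i [::] -> f i y] = K.
    by apply/seteqP; split => y; [case|move=> Ky; split => // ? []].
  split; [exists setT; [exact: openT|by rewrite setIT]|].
  by exists setT; [exact: closedT|rewrite setIT].
have -> : K `&` [set y | forall j, lin j (i :: l) -> f j y] =
    f i `&` (K `&` [set y | forall j, lin j l -> f j y]).
  apply/seteqP; split => y.
    move=> [Ky H]; split; first by apply: H; left.
    by split => // j Hj; apply: H; right.
  by move=> [fi [Ky H]]; split => // j [<-|Hj] //; apply: H.
exact: good_I.
Qed.

Lemma Q_sub (Y : set G) : open Y -> Qc `<=` Y ->
  exists C, [/\ good C, C x & C `<=` Y].
Proof.
move=> oY QY.
have cK' : compact (K `&` ~` Y) by apply: compact_closedI => //; exact: open_closedC.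
pose I := {p : set G * set G | [/\ good p.1, p.1 x, closed p.2 &
  p.1 = K `&` p.2]}.
have cov : forall y, (K `&` ~` Y) y -> exists i : I, ~ (sval i).2 y.
  move=> y [Ky nYy].
  have nQ : ~ Qc y by move=> /QY.
  have [C nC] : exists C, ~ (good C -> C x -> C y).
    apply: contrapT => H; apply: nQ; split => // C.
    by apply: contrapT => h; apply: H; exists C.
  have gC : good C by apply: contrapT => h; apply: nC => /h.
  have Cx : C x by apply: contrapT => h; apply: nC => _ /h.
  have nCy : ~ C y by move=> Cy; apply: nC.
  have gC' := gC; case: gC' => _ [F cF eF].
  exists (exist _ (C, F) (And4 gC Cx cF eF)) => /= Fy.
  by apply: nCy; rewrite eF.
have [l Hl] := @compact_fin _ I (fun i => (sval i).2) cK'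
  (fun i => let: exist _ (And4 _ _ c _) := i in c) cov.
exists (K `&` [set y | forall i, lin i l -> (sval i).1 y]); split.
- by apply: good_fin => -[[C F] [gC Cx cF eF]].
- by split => // -[[C F] [gC Cx cF eF]].
- move=> y [Ky Hy]; apply: contrapT => nYy.
  have [[[C F] [gC Cx cF eF]] [Hi /= nF]] := Hl y (conj Ky nYy).
  have eF' : C = K `&` F by exact: eF.
  by have := Hy _ Hi; rewrite /= eF' => -[].
Qed.

Lemma good_split C U V : good C -> C `<=` U `|` V -> open U -> open V ->
  X `&` U `&` V = set0 -> good (C `&` U).
Proof.
move=> [[V0 oV0 e0] [F0 cF0 f0]] CUV oU oV e; split.
- exists (V0 `&` U); first exact: openI.
  by rewrite e0; apply/seteqP; split => y; [move=> [[? ?] ?]|move=> [? [? ?]]].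
- exists (F0 `&` ~` V); first by apply: closedI => //; exact: open_closedC.
  apply/seteqP; split => y.
    move=> [Cy Uy]; have := Cy; rewrite f0 => -[Ky Fy].
    split => //; split => // Vy.
    have : (X `&` U `&` V) y by split; [split => //; exact: KX|].
    by rewrite e.
  move=> [Ky [Fy nVy]]; have Cy : C y by rewrite f0.
  by split => //; case: (CUV _ Cy).
Qed.

Lemma Q_compact : compact Qc.
Proof.
pose D := [set p : set G * set G | [/\ good p.1, p.1 x, closed p.2 &
  p.1 = K `&` p.2]].
have -> : Qc = K `&` \bigcap_(p in D) p.2.
  apply/seteqP; split => y.
    move=> [Ky H]; split => // -[C F] [gC Cx cF eF] /=.
    by have := H _ gC Cx; rewrite eF => -[].
  move=> [Ky H]; split => // C gC Cx.
  have gC' := gC; case: gC' => _ [F cF eF].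
  by rewrite eF; split => //; apply: (H (C, F)).
apply: compact_closedI => //; apply: closed_bigI => -[C F] [] //.
Qed.

Lemma Qx : Qc x. Proof. by split. Qed.

Lemma Q_conn : connected Qc.
Proof.
move=> B [b Bb] [O oO eO] [F cF eF].
have QX : Qc `<=` X by move=> y [Ky _]; exact: KX.
have cB : compact B by rewrite eF; apply: compact_closedI => //; exact: Q_compact.
have cA : compact (Qc `&` ~` O).
  by apply: compact_closedI; [exact: Q_compact|exact: open_closedC].
have dis : B `&` (Qc `&` ~` O) = set0.
  by apply/seteqP; split => // y; rewrite eO => -[[_ Oy] [_ nOy]].
have BX : B `<=` X by rewrite eO => y [/QX].
have [U [V [oU oV BU AV e]]] :=
  sep_compact2 BX (fun y (h : (Qc `&` ~` O) y) => QX _ h.1) cB cA dis.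
have QUV : Qc `<=` U `|` V.
  move=> y Qy; have [Oy|nOy] := pselect (O y).
    by left; apply: BU; rewrite eO.
  by right; apply: AV.
have [C0 [g0 C0x C0UV]] := Q_sub (openU oU oV) QUV.
have [Bx|nBx] := pselect (B x).
- have g1 := good_split g0 C0UV oU oV e.
  have QC1 : Qc `<=` C0 `&` U.
    move=> y [_ H]; apply: H g1 _; split => //; exact: BU.
  apply/seteqP; split; first by rewrite eO => y [].
  move=> y Qy; rewrite eO; split => //.
  apply: contrapT => nOy.
  have : (X `&` U `&` V) y.
    by split; [split; [exact: QX|exact: (QC1 _ Qy).2]|apply: AV].
  by rewrite e.
- have nOx : ~ O x by move=> Ox; apply: nBx; rewrite eO; split => //; exact: Qx.
  have C0VU : C0 `<=` V `|` U by move=> y /C0UV [] ?; [right|left].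
  have e' : X `&` V `&` U = set0 by rewrite -setIA (setIC V) setIA.
  have g1 := good_split g0 C0VU oV oU e'.
  have QC1 : Qc `<=` C0 `&` V.
    move=> y [_ H]; apply: H g1 _; split => //; apply: AV; split => //; exact: Qx.
  have Qb : Qc b by move: Bb; rewrite eO => -[].
  have : (X `&` U `&` V) b.
    by split; [split; [exact: QX|exact: BU]|exact: (QC1 _ Qb).2].
  by rewrite e.
Qed.

End Zero.

Lemma X_basis x (O : set G) : X x -> open O -> O x ->
  exists K, [/\ compact K, open K, K `<=` X `&` O & K x].
Proof.
move=> Xx oO Ox.
have [lc _ td] := Htop.
have [K [O1 [cK KX oO1 O1x sub]]] := lc x Xx.
have Kx : K x by apply: sub.
pose W := O `&` O1 `&` X.
have oW : open W by apply: openI; [exact: openI|exact: X_open].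
have Wx : W x by [].
have WK : W `<=` K by move=> y [[_ ?] ?]; apply: sub.
have QW : Qc x K `<=` W.
  have : Qc x K `<=` connected_component X x.
    apply: connected_component_max; first exact: Qx.
      by move=> y [Ky _]; exact: KX.
    exact: Q_conn cK KX Kx.
  by rewrite (td x Xx) => h y /h ->.
have [C [[[V oV eV] [F cF eF]] Cx CW]] := Q_sub cK Kx oW QW.
exists C; split => //.
- by rewrite eF; exact: compact_closedI.
- suff -> : C = W `&` V by exact: openI.
  apply/seteqP; split => y.
    by move=> Cy; split; [exact: CW|move: Cy; rewrite eV => -[]].
  by move=> [Wy Vy]; rewrite eV; split => //; exact: WK.
- by move=> y /CW [[? _] ?].
Qed.


Lemma cob_basis g (W : set G) : open W -> W g ->
  exists C, [/\ compact_open_bisection s r C, C g & C `<=` W].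
Proof.
move=> oW Wg; have [U [oU Ug [bs br]]] := open_bis g.
pose D := W `&` U.
have oD : open D by exact: openI.
have iD : forall x y, D x -> D y -> s x = s y -> x = y.
  by move=> x y [_ ?] [_ ?]; apply: bs.
have [K [cK oK KXD Ksg]] := X_basis (X_s g) (s_open oD) (ex_intro2 _ _ g (conj Wg Ug) erefl).
pose psi y := xget g (fun d => D d /\ s d = y).
have psiP : forall y, K y -> D (psi y) /\ s (psi y) = y.
  move=> y Ky; have [_ [d Dd sd]] := KXD _ Ky.
  by apply: (xgetPex g (P := fun d => D d /\ s d = y)); exists d.
pose C := D `&` s @^-1` K.
exists C; split.
- split.
  + have -> : C = psi @` K.
      apply/seteqP; split => c.
        move=> [Dc Ksc]; exists (s c) => //; have [Dp sp] := psiP _ Ksc.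
        exact: iD.
      by move=> [y Ky <-]; have [Dp sp] := psiP _ Ky; split => //; rewrite /= sp.
    apply: continuous_compact => //; apply/subspace_continuousP => y Ky N nN.
    have [Dp sp] := psiP _ Ky.
    have [O [oO Oy hO]] := sect_nbhs Ls oD iD Dp nN.
    rewrite sp in Oy.
    have nO : nbhs y O by apply: open_nbhs_nbhs.
    apply: filterS nO => z Oz Kz; have [Dz sz] := psiP _ Kz.
    by apply: hO => //; rewrite sz.
  + by apply: openI => //; apply: open_pre oK; exact: s_cont.
  + by split => x y [[_ Ux] _] [[_ Uy] _]; [apply: bs|apply: br].
- by split => //; split.
- by move=> y [[]].
Qed.


Local Notation A := (steinberg s r).
Definition zf : G -> bool := fun _ => false.
Definition chi (B : set G) : G -> bool := fun g => `[< B g >].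

Lemma chiP (B : set G) g : chi B g = true <-> B g.
Proof. by split => [/asboolP|/asboolP]. Qed.

Lemma A_zero : A zf.
Proof. by exists 0%N, (fun _ => set0); split => // g; split => // -[]. Qed.

Lemma A_chi B : compact_open_bisection s r B -> A (chi B).
Proof.
move=> cB; exists 1%N, (fun _ => B); split => // g; rewrite chiP.
by split => [Bg|[]]; [exists 0%N|].
Qed.

Lemma A_badd f g : A f -> A g -> A (badd f g).
Proof.
move=> [n1 [B1 [c1 h1]]] [n2 [B2 [c2 h2]]].
exists (n1 + n2)%N, (fun k => if (k < n1)%N then B1 k else B2 (k - n1)%N).
split.
  move=> k kn; case: ifP => kn1; first exact: c1.
  by apply: c2; lia.
move=> x; rewrite /badd; split.
  case/orP => [/h1 [i i1 Bi]|/h2 [j j2 Bj]].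
    by exists i; [lia|rewrite i1].
  exists (n1 + j)%N; first lia.
  by rewrite ifF; [rewrite addKn|lia].
move=> [k kn]; case: ifP => kn1 Bk.
  by apply/orP; left; apply/h1; exists k.
by apply/orP; right; apply/h2; exists (k - n1)%N => //; lia.
Qed.

Lemma A_conv f g : A f -> A g -> A (bconv s r mul f g).
Proof.
move=> [n1 [B1 [c1 h1]]] [n2 [B2 [c2 h2]]].
exists (n1 * n2)%N, (fun k => prodset (B1 (k %/ n2)%N) (B2 (k %% n2)%N)).
have n2p : forall k, (k < n1 * n2)%N -> (0 < n2)%N by move=> k; nia.
split.
  move=> k kn; have := n2p _ kn => n2p'.
  apply: cob_prod; [apply: c1|apply: c2]; last by rewrite ltn_pmod.
  by rewrite ltn_divLR.
move=> c; rewrite /bconv; split.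
  move/asboolP => [a [b [e <- fa gb]]].
  have [i i1 Bi] := (h1 a).1 fa; have [j j2 Bj] := (h2 b).1 gb.
  have n2p' : (0 < n2)%N by lia.
  exists (i * n2 + j)%N; first nia.
  exists a, b; split => //.
    by rewrite divnMDl // divn_small // addn0.
  by rewrite modnMDl modn_small.
move=> [k kn [a [b [Ba Bb e ->]]]].
have n2p' := n2p _ kn.
apply/asboolP; exists a, b; split => //.
  by apply/h1; exists (k %/ n2)%N => //; rewrite ltn_divLR.
by apply/h2; exists (k %% n2)%N => //; rewrite ltn_pmod.
Qed.


Lemma boolE (b : bool) (P : Prop) : (b = true <-> P) -> b = `[< P >].
Proof.
case: b => h.
  by apply/esym/asboolP; apply/h.
by apply/esym/negbTE/asboolPn => /h.
Qed.

Lemma conv0l (h : G -> bool) : bconv s r mul zf h = zf.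
Proof. by apply/funext => c; apply/negbTE/asboolPn => -[a [b []]]. Qed.

Lemma conv0r (h : G -> bool) : bconv s r mul h zf = zf.
Proof. by apply/funext => c; apply/negbTE/asboolPn => -[a [b []]]. Qed.

Lemma badd0l (h : G -> bool) : badd zf h = h. Proof. by []. Qed.

Lemma baddC (f g : G -> bool) : badd f g = badd g f.
Proof. by apply/funext => x; rewrite /badd orbC. Qed.

Lemma baddK (f : G -> bool) : badd f f = f.
Proof. by apply/funext => x; rewrite /badd orbb. Qed.

Lemma badd_le (a m : G -> bool) : (forall g, a g -> m g) -> badd m a = m.
Proof.
move=> le; apply/funext => x; rewrite /badd.
by case: (boolP (a x)) => [/le ->|]; rewrite ?orbF.
Qed.

Lemma supp_compact_open f : A f ->
  compact [set x | f x] /\ open [set x | f x].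
Proof.
move=> [n [Bs [cB hB]]].
have -> : [set x | f x] = [set x | exists2 i, (i < n)%N & Bs i x].
  by apply/seteqP; split => x /hB.
split.
  elim: n cB {hB} => [|n IH] cB.
    have -> : [set x | exists2 i, (i < 0)%N & Bs i x] = set0.
      by apply/seteqP; split => // x [].
    exact: compact0.
  have -> : [set x | exists2 i, (i < n.+1)%N & Bs i x] =
      [set x | exists2 i, (i < n)%N & Bs i x] `|` Bs n.
    apply/seteqP; split => x.
      move=> [i]; rewrite ltnS leq_eqVlt => /orP [/eqP ->|iln] Bx.
        by right.
      by left; exists i.
    by move=> [[i i1 Bi]|Bn]; [exists i => //; lia|exists n].
  apply: compactU; first by apply: IH => i ii; apply: cB; lia.
  by case: (cB n (ltnSn n)).
have -> : [set x | exists2 i, (i < n)%N & Bs i x] =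
    [set x | exists i, (i < n)%N /\ Bs i x].
  by apply/seteqP; split => x; [move=> [i ? ?]|move=> [i [? ?]]]; exists i.
by apply: open_cup => i iin; case: (cB i iin).
Qed.


Section Eff.
Hypothesis Heff : effective s r.

Lemma shrink1 (Om D : set G) : open Om -> Om `<=` X -> (exists w, Om w) ->
  compact_open_bisection s r D -> (forall d, D d -> ~ X d) ->
  exists Om', [/\ open Om', Om' `<=` Om, (exists w, Om' w) &
    forall d, D d -> ~ (Om' (s d) /\ Om' (r d))].
Proof.
move=> oOm OmX [w0 Omw0] [cD oD [bs br]] DX.
have [x [Omx nfix]] : exists x, Om x /\ ~ (exists d, [/\ D d, s d = x & r d = x]).
  apply: contrapT => H.
  have all_fix : forall x, Om x -> exists d, [/\ D d, s d = x & r d = x].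
    move=> x Omx; apply: contrapT => h; apply: H; exists x; split => //.
  have [d0 [Dd0 sd0 rd0]] := all_fix _ Omw0.
  pose D' := D `&` s @^-1` Om.
  have oD' : open D' by apply: openI => //; apply: open_pre oOm; exact: s_cont.
  have D'fix : D' `<=` [set g | s g = r g].
    move=> d [Dd Omsd]; have [d' [Dd' sd' rd']] := all_fix _ Omsd.
    have edd : d' = d by apply: bs.
    by rewrite /= -edd sd' rd'.
  have : [set g | s g = r g]° d0.
    have : D'° d0 by move: oD'; rewrite openE => /(_ d0); apply; split => //; rewrite /= sd0.
    exact: interiorS.
  by rewrite Heff => /(DX _ Dd0).
have Xx : X x := OmX _ Omx.
have [[d0 Dd0 sd0]|nimg] := pselect (exists2 d, D d & s d = x).
- have nrx : x <> r d0 by move=> e; apply: nfix; exists d0; split.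
  have [U1 [W1 [oU1 oW1 U1x W1r e1]]] := hd Xx (X_r d0) nrx.
  pose Om' := Om `&` U1 `&` s @` (D `&` r @^-1` W1).
  exists Om'; split.
  + apply: openI; first exact: openI.
    by apply: s_open; apply: openI => //; apply: open_pre oW1; exact: r_cont.
  + by move=> y [[]].
  + by exists x; split; [split|exists d0].
  + move=> d Dd [[[_ _] [d' [Dd' W1d'] e']] [[_ U1rd] _]].
    have edd : d' = d by apply: bs.
    subst d'.
    have : (X `&` U1 `&` W1) (r d) by split; [split; [exact: X_r|]|].
    by rewrite e1.
- have cimg : compact (s @` D).
    by apply: continuous_compact cD; apply: continuous_subspaceT; exact: s_cont.
  have imgX : s @` D `<=` X by move=> _ [d _ <-]; exact: X_s.
  have nx : ~ (s @` D) x by move=> [d Dd sd]; apply: nimg; exists d.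
  have [U [V [oU oV Ux DV e]]] := sep_point_compact Xx imgX cimg nx.
  exists (Om `&` U); split.
  + exact: openI.
  + by move=> y [].
  + by exists x.
  + move=> d Dd [[_ Usd] _].
    have : (X `&` U `&` V) (s d) by split; [split; [exact: X_s|]|apply: DV; exists d].
    by rewrite e.
Qed.

Lemma shrink_fin n (Ds : nat -> set G) (Om : set G) :
  (forall j, (j < n)%N -> compact_open_bisection s r (Ds j) /\
     (forall d, Ds j d -> ~ X d)) ->
  open Om -> Om `<=` X -> (exists w, Om w) ->
  exists Om', [/\ open Om', Om' `<=` Om, (exists w, Om' w) &
    forall j d, (j < n)%N -> Ds j d -> ~ (Om' (s d) /\ Om' (r d))].
Proof.
move=> hD oOm OmX neOm; elim: n hD => [|n IH] hD.
  by exists Om; split => // j d.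
have [Om1 [oOm1 sub1 ne1 H1]] : exists Om', [/\ open Om', Om' `<=` Om, (exists w, Om' w) &
    forall j d, (j < n)%N -> Ds j d -> ~ (Om' (s d) /\ Om' (r d))].
  by apply: IH => j jn; apply: hD; lia.
have [cD DX] := hD n (ltnSn n).
have [Om2 [oOm2 sub2 ne2 H2]] :=
  shrink1 oOm1 (fun y h => OmX _ (sub1 _ h)) ne1 cD DX.
exists Om2; split => //.
  by move=> y /sub2 /sub1.
move=> j d; rewrite ltnS leq_eqVlt => /orP [/eqP ->|jn] Dd.
  exact: H2.
by move=> [/sub2 h1 /sub2 h2]; apply: (H1 j d).
Qed.

End Eff.


Lemma cob_unit U : compact U -> open U -> U `<=` X ->
  compact_open_bisection s r U.
Proof.
move=> cU oU UX; split => //; split => x y Ux Uy.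
  by rewrite (Xs (UX _ Ux)) (Xs (UX _ Uy)).
by rewrite (Xr (UX _ Ux)) (Xr (UX _ Uy)).
Qed.

Section Cong.
Variable R : (G -> bool) -> (G -> bool) -> Prop.
Hypothesis cR : congruence s r mul R.

Lemma Rrefl f : A f -> R f f. Proof. by case: cR => H _ _ _; apply: H. Qed.
Lemma Rsym f g : A f -> A g -> R f g -> R g f.
Proof. by case: cR => _ H _ _; apply: H. Qed.
Lemma Rtrans f g h : A f -> A g -> A h -> R f g -> R g h -> R f h.
Proof. by case: cR => _ _ H _; apply: H. Qed.
Lemma Radd f f' g g' : A f -> A f' -> A g -> A g' -> R f f' -> R g g' ->
  R (badd f g) (badd f' g').
Proof. by case: cR => _ _ _ H ? ? ? ? ? ?; case: (H f f' g g'). Qed.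
Lemma Rconv f f' g g' : A f -> A f' -> A g -> A g' -> R f f' -> R g g' ->
  R (bconv s r mul f g) (bconv s r mul f' g').
Proof. by case: cR => _ _ _ H ? ? ? ? ? ?; case: (H f f' g g'). Qed.

Lemma down a m : A a -> A m -> R zf m -> (forall g, a g -> m g) -> R zf a.
Proof.
move=> Aa Am R0m le.
have h : R (badd zf a) (badd m a) by apply: Radd => //; [exact: A_zero|exact: Rrefl].
rewrite badd0l badd_le // in h.
apply: Rtrans R0m _ => //; [exact: A_zero|exact: Rsym].
Qed.

Lemma R_convl E f : A E -> A f -> R zf f -> R zf (bconv s r mul E f).
Proof.
move=> AE Af R0f.
have := Rconv AE AE A_zero Af (Rrefl AE) R0f.
by rewrite conv0r.
Qed.

Lemma R_convr E f : A E -> A f -> R zf f -> R zf (bconv s r mul f E).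
Proof.
move=> AE Af R0f.
have := Rconv A_zero Af AE AE R0f (Rrefl AE).
by rewrite conv0l.
Qed.

Section Min.
Hypothesis Hmin : minimal s r.

Lemma R_from_U U : compact U -> open U -> U `<=` X -> (exists u, U u) ->
  R zf (chi U) -> forall f, A f -> R zf f.
Proof.
move=> cU oU UX [u Uu] R0U.
have cobU := cob_unit cU oU UX.
have AU : A (chi U) := A_chi cobU.
pose D := r @` (s @^-1` U).
have oD : open D by apply: r_open; apply: open_pre oU; exact: s_cont.
have DX : D `<=` X by move=> _ [h _ <-]; exact: X_r.
have Dfull : D = X.
  case: (Hmin DX _ _) => //.
  - exists D => //; apply/seteqP; split => y; first by move=> Dy; split => //; exact: DX.
    by case.
  - move=> g [h Uh rh]; exists (mul g h); rewrite /= ?smul ?rmul //.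
  - move=> e0; have : D u by exists u; rewrite /= ?Xs ?Xr //; exact: UX.
    by rewrite e0.
pose m E := bconv s r mul (bconv s r mul (chi E) (chi U)) (chi (inv @` E)).
have mP : forall E, compact_open_bisection s r E -> E `<=` s @^-1` U ->
    [/\ A (m E), R zf (m E) & forall e, E e -> m E (r e)].
  move=> E cE EU; have AE := A_chi cE; have AEi := A_chi (cob_inv cE).
  split.
  - by apply: A_conv => //; exact: A_conv.
  - by apply: R_convr => //; [exact: A_conv|exact: R_convl].
  - move=> e Ee; apply/asboolP; exists e, (inv e); split.
    + by rewrite rinv.
    + by rewrite mulV.
    + apply/asboolP; exists e, (s e); split; rewrite ?rs ?muls //.
        exact/chiP.
      by apply/chiP; exact: EU.
    + by apply/chiP; exists e.
pose I := {E : set G | compact_open_bisection s r E /\ E `<=` s @^-1` U}.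
have res : forall B, compact_open_bisection s r B -> R zf (chi B).
  move=> B cB; have [cB' oB bB] := cB.
  have cW : compact (s @` B).
    by apply: continuous_compact cB'; apply: continuous_subspaceT; exact: s_cont.
  have cov : forall w, (s @` B) w -> exists i : I, ~ (~` (r @` sval i)) w.
    move=> _ [b Bb <-]; have : D (s b) by rewrite Dfull; exact: X_s.
    move=> [h Uh rh].
    have [E [cE Eh EU]] := cob_basis (open_pre s_cont oU) Uh.
    by exists (exist _ E (conj cE EU)) => /= H; apply: H; exists h.
  have clos : forall i : I, closed (~` (r @` sval i)).
    move=> i; case: (svalP i) => -[_ oE _] _; apply: open_closedC; exact: r_open.
  have [l Hl] := compact_fin cW clos cov.
  pose Mf (l' : seq I) := foldr (fun (i : I) acc => badd (m (sval i)) acc) zf l'.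
  have gen : forall l' : seq I, [/\ A (Mf l'), R zf (Mf l') &
      forall y, (exists i, lin i l' /\ m (sval i) y) -> Mf l' y].
    rewrite /Mf; elim => [|i l' [IH1 IH2 IH3]] /=.
      split; [exact: A_zero|exact: Rrefl A_zero|by move=> y [? []]].
    have [cE EU] := svalP i; have [Am R0m _] := mP _ cE EU.
    split.
    - exact: A_badd.
    - by rewrite -(baddK zf); apply: Radd => //; exact: A_zero.
    - move=> y [j [[<-|jl] my]]; rewrite /badd; apply/orP; first by left.
      by right; apply: IH3; exists j.
  have [AM R0M MP] := gen l.
  have AB := A_chi cB.
  apply: (down AB (A_conv AB AM) (R_convl AB AM R0M)).
  move=> b /chiP Bb; apply/asboolP; exists b, (s b); split; rewrite ?rs ?muls //.
    exact/chiP.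
  have [i [Hi nr]] := Hl (s b) (ex_intro2 _ _ b Bb erefl).
  have [e Ee re] : (r @` sval i) (s b) by apply: contrapT.
  apply: MP; exists i; split => //; rewrite -re.
  by have [_ _ ->] := mP _ (svalP i).1 (svalP i).2.
move=> f [n [Bs [cBs hBs]]].
pose Fn k := fun g => `[< exists2 i, (i < k)%N & Bs i g >].
have : forall k, (k <= n)%N -> A (Fn k) /\ R zf (Fn k).
  elim => [|k IH] kn.
    have -> : Fn 0%N = zf by apply/funext => g; apply/negbTE/asboolPn => -[].
    by split; [exact: A_zero|exact: Rrefl A_zero].
  have [IH1 IH2] := IH (ltnW kn).
  have -> : Fn k.+1 = badd (Fn k) (chi (Bs k)).
    apply/funext => g; apply/esym/boolE; rewrite /badd; split.
      case/orP => [/asboolP [i ik Bi]|/chiP Bk]; [exists i => //; lia|by exists k].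
    move=> [i]; rewrite ltnS leq_eqVlt => /orP [/eqP ->|ik] Bi.
      by apply/orP; right; apply/chiP.
    by apply/orP; left; apply/asboolP; exists i.
  have AB := A_chi (cBs _ kn).
  split; first exact: A_badd.
  rewrite -(baddK zf); apply: Radd => //; try exact: A_zero.
  by apply: res; exact: cBs.
have -> : f = Fn n by apply/funext => g; apply: boolE; apply: hBs.
by move/(_ n (leqnn n)) => [].
Qed.

End Min.

Lemma L4a f g : A f -> A g -> R f g -> f <> g ->
  exists h1 h2, [/\ A h1, A h2, R h1 h2, (forall x, h1 x -> h2 x) &
    exists x, h2 x /\ ~~ h1 x].
Proof.
move=> Af Ag Rfg nfg.
have Ah := A_badd Af Ag.
have Rfh : R f (badd f g).
  by have := Radd Af Af Af Ag (Rrefl Af) Rfg; rewrite baddK.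
have Rgh : R g (badd f g).
  have := Radd Ag Ag Ag Af (Rrefl Ag) (Rsym Af Ag Rfg).
  by rewrite baddK baddC.
have [efh|nfh] := pselect (f = badd f g).
- have ngh : g <> badd f g by move=> e; apply: nfg; rewrite efh -e.
  have [x nx] : exists x, g x <> badd f g x.
    by apply: contrapT => H; apply: ngh; apply/funext => x; apply: contrapT => h; apply: H; exists x.
  exists g, (badd f g); split => //.
    by move=> y gy; rewrite /badd gy orbT.
  by exists x; move: nx; rewrite /badd; case: (g x); case: (f x).
- have [x nx] : exists x, f x <> badd f g x.
    by apply: contrapT => H; apply: nfh; apply/funext => x; apply: contrapT => h; apply: H; exists x.
  exists f, (badd f g); split => //.
    by move=> y fy; rewrite /badd fy.
  by exists x; move: nx; rewrite /badd; case: (g x); case: (f x).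
Qed.

Lemma L4b h1 h2 : (forall S : set G, compact S -> open S -> regopen S) ->
  A h1 -> A h2 -> (exists x, h2 x /\ ~~ h1 x) ->
  exists C, [/\ compact_open_bisection s r C, (exists c, C c),
    (forall c, C c -> h2 c) & (forall c, C c -> ~~ h1 c)].
Proof.
move=> Hreg Ah1 Ah2 [x [h2x nh1x]].
have [cS oS] := supp_compact_open Ah1.
have reg := Hreg _ cS oS.
have Ah2' := Ah2; case: Ah2' => n [Bs [cBs hBs]].
have [i iln Bx] := (hBs x).1 h2x.
have [cB oB bB] := cBs i iln.
have [d [Bd ncl]] : exists d, Bs i d /\ ~ closure [set y | h1 y] d.
  apply: contrapT => H.
  have BS : Bs i `<=` closure [set y | h1 y].
    by move=> y By; apply: contrapT => nc; apply: H; exists y.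
  have := interiorS BS; rewrite reg (proj1 (interior_id _) oB) => /(_ x Bx).
  by move=> /= h; move: nh1x; rewrite h.
have [N [nN NS]] : exists N, nbhs d N /\ ~ ([set y | h1 y] `&` N !=set0).
  apply: contrapT => H; apply: ncl => N nN; apply: contrapT => h.
  by apply: H; exists N.
have oW : open (Bs i `&` N°) by apply: openI => //; exact: open_interior.
have [C [cC Cd CW]] := cob_basis oW (conj Bd nN).
exists C; split => //; first by exists d.
  by move=> c /CW [Bc _]; apply/(hBs c).2; exists i.
move=> c /CW [_ Nc]; apply/negP => h1c; apply: NS; exists c; split => //.
exact: interior_subset.
Qed.

Lemma L4c h1 h2 C : effective s r -> A h1 -> A h2 -> R h1 h2 ->
  compact_open_bisection s r C -> (exists c, C c) ->
  (forall c, C c -> h2 c) -> (forall c, C c -> ~~ h1 c) ->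
  exists U, [/\ compact U, open U, U `<=` X, (exists u, U u) & R zf (chi U)].
Proof.
move=> Heff Ah1 Ah2 R12 cC [c0 Cc0] C2 C1.
have cCi := cob_inv cC; have ACi := A_chi cCi.
pose k1 := bconv s r mul (chi (inv @` C)) h1.
pose k2 := bconv s r mul (chi (inv @` C)) h2.
have Ak1 : A k1 by exact: A_conv.
have Ak2 : A k2 by exact: A_conv.
have Rk : R k1 k2 by apply: Rconv => //; exact: Rrefl.
have [_ oC _] := cC.
pose V := s @` C.
have oV : open V by exact: s_open.
have VX : V `<=` X by move=> _ [c _ <-]; exact: X_s.
have k2V : forall v, V v -> k2 v.
  move=> _ [c Cc <-]; apply/asboolP; exists (inv c), c; split.
  - by rewrite sinv.
  - by rewrite mulVx.
  - by apply/chiP; exists c.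
  - exact: C2.
have k1X : forall y, k1 y -> ~ X y.
  move=> y /asboolP [a [b [e <- /chiP [c Cc eac] h1b]]] Xu.
  subst a.
  have sc : s c = mul (inv c) b by rewrite -rinv -(rmul e) (Xr Xu).
  have ecb : c = b.
    transitivity (mul c (mul (inv c) b)); first by rewrite -sc muls.
    rewrite -mulA ?rinv // mulV.
    have -> : r c = r b by rewrite -sinv e.
    exact: mulr.
  by move: (C1 _ Cc); rewrite ecb h1b.
have Ak1' := Ak1; case: Ak1' => n [Ds [cDs hDs]].
have hD : forall j, (j < n)%N -> compact_open_bisection s r (Ds j) /\
    (forall d, Ds j d -> ~ X d).
  move=> j jn; split; first exact: cDs.
  by move=> d Dd; apply: k1X; apply/(hDs d).2; exists j.
have [Om [oOm OmV [w Omw] HOm]] :=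
  shrink_fin Heff hD oV VX (ex_intro _ (s c0) (ex_intro2 _ _ c0 Cc0 erefl)).
have [U [cU oU UXO Uw]] := X_basis (VX _ (OmV _ Omw)) oOm Omw.
have UX : U `<=` X by move=> y /UXO [].
have cobU := cob_unit cU oU UX.
have AU := A_chi cobU.
exists U; split => //; first by exists w.
pose m1 := bconv s r mul (bconv s r mul (chi U) k1) (chi U).
pose m2 := bconv s r mul (bconv s r mul (chi U) k2) (chi U).
have Am2 : A m2 by apply: A_conv => //; exact: A_conv.
have Rm : R m1 m2.
  apply: Rconv => //; try exact: A_conv; last exact: Rrefl.
  by apply: Rconv => //; exact: Rrefl.
have m10 : m1 = zf.
  apply/funext => y; apply/negbTE/asboolPn.
  move=> [x [z [e _ /asboolP [u [b [e' eub /chiP Uu k1b]]] /chiP Uz]]].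
  subst x.
  have [j jn Db] := (hDs b).1 k1b.
  apply: (HOm j b jn Db); split.
  - have : s b = z by rewrite -(smul e') e (Xr (UX _ Uz)).
    by move=> ->; case: (UXO _ Uz).
  - have : r b = u by rewrite -e' (Xs (UX _ Uu)).
    by move=> ->; case: (UXO _ Uu).
rewrite m10 in Rm.
apply: (down AU Am2 Rm) => y /chiP Uy.
have sy : s y = y := Xs (UX _ Uy).
have ry : r y = y := Xr (UX _ Uy).
apply/asboolP; exists y, y; split => //.
- by rewrite sy ry.
- by rewrite -{2}sy muls.
- apply/asboolP; exists y, y; split => //.
  + by rewrite sy ry.
  + by rewrite -{2}sy muls.
  + exact/chiP.
  + by apply: k2V; apply: OmV; case: (UXO _ Uy).
- exact/chiP.
Qed.

End Cong.

End Main.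

Theorem corollary3p9 (G : topologicalType) (s r : G -> G)
  (mul : G -> G -> G) (inv : G -> G) :
  ample_groupoid s r mul inv ->
  @second_countable G ->
  minimal s r -> effective s r ->
  (forall A : set G, compact A -> open A -> regopen A) ->
  congruence_simple s r mul.
Proof.
move=> HA _ Hmin Heff Hreg R cR.
have [H|H] := pselect (forall f g, steinberg s r f -> steinberg s r g ->
  R f g -> f = g); first by right.
left.
have [f [g [Af Ag Rfg nfg]]] : exists f g, [/\ steinberg s r f,
    steinberg s r g, R f g & f <> g].
  apply: contrapT => N; apply: H => f g Af Ag Rfg.
  by apply: contrapT => nfg; apply: N; exists f, g.
have [h1 [h2 [Ah1 Ah2 R12 le nx]]] := L4a cR Af Ag Rfg nfg.
have [C [cC neC C2 C1]] := L4b HA Hreg Ah1 Ah2 nx.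
have [U [cU oU UX neU R0U]] := L4c HA cR Heff Ah1 Ah2 R12 cC neC C2 C1.
have R0 := R_from_U HA cR Hmin cU oU UX neU R0U.
move=> f' g' Af' Ag'.
apply: (Rtrans cR Af' (A_zero s r) Ag' _ (R0 _ Ag')).
exact: (Rsym cR (A_zero s r) Af' (R0 _ Af')).
Qed.
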